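(* Let $0<q<1$, $\alpha,\gamma\in\mathbb{C}$ with $q^\gamma\notin q^{\mathbb{Z}}$, and $z\in\mathbb{C}\setminus\{0\}$ (complex powers of $z$ taken with a fixed branch of $\log z$). For $n\in\mathbb{Z}$ put \begin{align*} \varphi_n&=(q^{n+\gamma};q)_\infty\,{}_1\phi_1(q^\alpha;q^{n+\gamma};q,-q^{n+\gamma}z),\\ \psi_n&=q^{-\alpha(n+\gamma)-(n+\gamma-1)(n+\gamma-2)/2}\,\frac{(q^{n+\gamma-\alpha};q)_\infty}{(q^{n+\gamma-1};q)_\infty}\,z^{1-n-\gamma}\,{}_1\phi_1(q^{\alpha-n-\gamma+1};q^{2-n-\gamma};q,-qz). \end{align*} Then \[ \varphi_0\psi_1-\varphi_1\psi_0=q^{-\alpha(\gamma+1)-\frac12\gamma(\gamma-1)}\,(q^{\gamma-\alpha+1};q)_\infty\,(-q^\alpha z;q)_\infty\,z^{-\gamma}. \] Equivalently, \begin{align*} &{}_1\phi_1(q^\alpha;q^\gamma;q,q^{\gamma-\alpha}z)\,{}_1\phi_1(q^{\alpha-\gamma};q^{1-\gamma};q,q^{1-\alpha}z)\\ &+\frac{q^{\gamma-1}(1-q^{\gamma-\alpha})z}{(1-q^{\gamma-1})(1-q^\gamma)}\,{}_1\phi_1(q^\alpha;q^{\gamma+1};q,q^{\gamma-\alpha+1}z)\,{}_1\phi_1(q^{\alpha-\gamma+1};q^{2-\gamma};q,q^{1-\alpha}z)=(z;q)_\infty. \end{align*}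
   Context: Complex powers of $q$ are $q^s=e^{s\log q}$. $(a;q)_k=\prod_{j=0}^{k-1}(1-aq^j)$, $(a;q)_\infty=\lim_k(a;q)_k$, and the $q$-confluent hypergeometric function is \[ {}_1\phi_1(a;b;q,z)=\sum_{k=0}^\infty(-1)^kq^{k(k-1)/2}\frac{(a;q)_k}{(b;q)_k(q;q)_k}\,z^k. \] *)

(* Defs.v *)
From Stdlib Require Import Reals ZArith.
From Coquelicot Require Export Coquelicot.
Open Scope R_scope.

Definition cexp (w : C) : C :=
  (exp (Re w) * cos (Im w), exp (Re w) * sin (Im w)).

Definition qpow (q : R) (s : C) : C := cexp (Cmult s (RtoC (ln q))).

(* complex power of z with a fixed branch L of log z (cexp L = z) : z^s = e^{s L} *)
Definition zpow (L : C) (s : C) : C := cexp (Cmult s L).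

(* limit of a complex sequence, taken componentwise (only meaningful when it converges) *)
Definition Clim (u : nat -> C) : C :=
  (real (Lim_seq (fun k => Re (u k))), real (Lim_seq (fun k => Im (u k)))).

Fixpoint qpoch (a : C) (q : R) (k : nat) : C :=
  match k with
  | O => RtoC 1
  | S k' => Cmult (qpoch a q k') (Cminus (RtoC 1) (Cmult a (RtoC (q ^ k'))))
  end.

Definition qpoch_inf (a : C) (q : R) : C := Clim (qpoch a q).

Definition phi11_term (a b : C) (q : R) (z : C) (k : nat) : C :=
  Cmult (RtoC ((-1) ^ k * q ^ (k * (k - 1) / 2)%nat))
    (Cmult (Cdiv (qpoch a q k) (Cmult (qpoch b q k) (qpoch (RtoC q) q k)))
           (Cpow z k)).

Definition phi11 (a b : C) (q : R) (z : C) : C :=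
  Clim (fun n => sum_n (phi11_term a b q z) n).

Definition phi_n (q : R) (al ga z : C) (n : Z) : C :=
  let ng := Cplus (RtoC (IZR n)) ga in
  Cmult (qpoch_inf (qpow q ng) q)
        (phi11 (qpow q al) (qpow q ng) q (Copp (Cmult (qpow q ng) z))).

Definition psi_n (q : R) (al ga z L : C) (n : Z) : C :=
  let ng := Cplus (RtoC (IZR n)) ga in
  Cmult (qpow q (Cminus (Copp (Cmult al ng))
                        (Cdiv (Cmult (Cminus ng (RtoC 1)) (Cminus ng (RtoC 2))) (RtoC 2))))
  (Cmult (Cdiv (qpoch_inf (qpow q (Cminus ng al)) q)
               (qpoch_inf (qpow q (Cminus ng (RtoC 1))) q))
  (Cmult (zpow L (Cminus (RtoC 1) ng))
         (phi11 (qpow q (Cplus (Cminus al ng) (RtoC 1)))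
                (qpow q (Cminus (RtoC 2) ng)) q
                (Copp (Cmult (RtoC q) z))))).

(* Main.v *)
Require Import Defs.
From Stdlib Require Import Reals ZArith Lra Lia.
From Coquelicot Require Import Coquelicot.
Open Scope R_scope.


Lemma cexp_add (u v : C) : cexp (Cplus u v) = Cmult (cexp u) (cexp v).
Proof.
  unfold cexp; destruct u as [u1 u2]; destruct v as [v1 v2]; simpl.
  rewrite exp_plus, cos_plus, sin_plus.
  apply injective_projections; simpl; ring.
Qed.

Lemma cexp_0 : cexp (RtoC 0) = RtoC 1.
Proof.
  unfold cexp; simpl. rewrite exp_0, cos_0, sin_0.
  apply injective_projections; simpl; ring.
Qed.

Lemma cexp_neq0 (u : C) : cexp u <> RtoC 0.
Proof.
  intro H. assert (H1 := cexp_add u (Copp u)).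
  rewrite H, Cmult_0_l in H1.
  replace (Cplus u (Copp u)) with (RtoC 0) in H1 by ring.
  rewrite cexp_0 in H1. injection H1. lra.
Qed.

Lemma qpow_add q (s t : C) : qpow q (Cplus s t) = Cmult (qpow q s) (qpow q t).
Proof.
  unfold qpow. rewrite <- cexp_add. f_equal. ring.
Qed.

Lemma qpow_ext q (s t : C) : s = t -> qpow q s = qpow q t.
Proof. intros ->; reflexivity. Qed.

Lemma qpow_neq0 q s : qpow q s <> RtoC 0.
Proof. apply cexp_neq0. Qed.

Lemma qpow_0 q : qpow q (RtoC 0) = RtoC 1.
Proof. unfold qpow. rewrite <- cexp_0. f_equal. ring. Qed.

Lemma qpow_1 q : 0 < q -> qpow q (RtoC 1) = RtoC q.
Proof.
  intro hq. unfold qpow, cexp; simpl.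
  apply injective_projections; simpl.
  - replace (1 * ln q - 0 * 0) with (ln q) by ring.
    replace (1 * 0 + 0 * ln q) with 0 by ring.
    rewrite cos_0, exp_ln by lra. ring.
  - replace (1 * ln q - 0 * 0) with (ln q) by ring.
    replace (1 * 0 + 0 * ln q) with 0 by ring.
    rewrite sin_0. ring.
Qed.

Lemma qpow_nat q (n : nat) : 0 < q -> qpow q (RtoC (INR n)) = RtoC (q ^ n).
Proof.
  intro hq. induction n.
  - simpl. apply qpow_0.
  - rewrite S_INR. rewrite (qpow_ext q _ (Cplus (RtoC (INR n)) (RtoC 1))).
    2:{ unfold RtoC, Cplus; simpl. f_equal. ring. }
    rewrite qpow_add, IHn, qpow_1 by auto. simpl.
    rewrite RtoC_mult. ring.
Qed.

Lemma zpow_add L (s t : C) : zpow L (Cplus s t) = Cmult (zpow L s) (zpow L t).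
Proof. unfold zpow. rewrite <- cexp_add. f_equal. ring. Qed.

Lemma zpow_1 L : zpow L (RtoC 1) = cexp L.
Proof. unfold zpow. f_equal. ring. Qed.


Definition good (q : R) (b : C) := forall j : nat, Cminus (RtoC 1) (Cmult b (RtoC (q ^ j))) <> RtoC 0.

Lemma qpoch_0 a q : qpoch a q 0 = RtoC 1.
Proof. reflexivity. Qed.

Lemma qpoch_S a q k : qpoch a q (S k) = Cmult (qpoch a q k) (Cminus (RtoC 1) (Cmult a (RtoC (q ^ k)))).
Proof. reflexivity. Qed.

Lemma RtoC_pow_S q k : RtoC (q ^ S k) = Cmult (RtoC q) (RtoC (q ^ k)).
Proof. simpl. rewrite RtoC_mult. reflexivity. Qed.

Lemma qpoch_shift a q k : qpoch a q (S k) = Cmult (Cminus (RtoC 1) a) (qpoch (Cmult a (RtoC q)) q k).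
Proof.
  induction k.
  - rewrite qpoch_S, !qpoch_0. change (q ^ 0) with 1. ring.
  - rewrite qpoch_S, IHk, qpoch_S, RtoC_pow_S. ring.
Qed.

Lemma qpoch_neq0 q b k : good q b -> qpoch b q k <> RtoC 0.
Proof.
  intro hb. induction k.
  - rewrite qpoch_0. intro H. injection H. lra.
  - rewrite qpoch_S. apply Cmult_neq_0; auto.
Qed.

Lemma good_shift q b : good q b -> good q (Cmult b (RtoC q)).
Proof.
  intros hb j. specialize (hb (S j)). rewrite RtoC_pow_S in hb.
  rewrite <- Cmult_assoc. exact hb.
Qed.

Lemma good_1 q b : good q b -> Cminus (RtoC 1) b <> RtoC 0.
Proof.
  intros hb. specialize (hb 0%nat). simpl in hb.
  replace (Cmult b (RtoC 1)) with b in hb by ring. exact hb.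
Qed.

Lemma pow_01 q j : 0 <= q -> q <= 1 -> 0 <= q ^ j <= 1.
Proof.
  intros h0 h1. induction j; simpl; [lra|].
  split; [apply Rmult_le_pos; lra|]. 
  replace 1 with (1 * 1) by ring. apply Rmult_le_compat; lra.
Qed.

Lemma good_q q : 0 < q -> q < 1 -> good q (RtoC q).
Proof.
  intros h0 h1 j. rewrite <- RtoC_mult. unfold Cminus. rewrite <- RtoC_opp, <- RtoC_plus.
  intro H. injection H. intros H2.
  assert (q * q ^ j <= q * 1).
  { apply Rmult_le_compat_l; [lra|]. apply (pow_01 q j); lra. }
  lra.
Qed.

Lemma tri_S k : ((S k * (S k - 1)) / 2 = k * (k - 1) / 2 + k)%nat.
Proof.
  replace (S k * (S k - 1))%nat with (k * (k - 1) + k * 2)%nat.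
  - apply Nat.div_add. lia.
  - destruct k; simpl; lia.
Qed.

Definition sg (q : R) (k : nat) : R := (-1) ^ k * q ^ (k * (k - 1) / 2)%nat.

Lemma sg_S q k : sg q (S k) = - (q ^ k) * sg q k.
Proof.
  unfold sg. rewrite tri_S, pow_add. simpl. ring.
Qed.

Lemma sg_0 q : sg q 0 = 1.
Proof. unfold sg; simpl; ring. Qed.

Lemma Cpow_mult (x y : C) k : Cpow (Cmult x y) k = Cmult (Cpow x k) (Cpow y k).
Proof. induction k; simpl; [ring|]. rewrite IHk. ring. Qed.

Lemma Cpow_R (r : R) k : Cpow (RtoC r) k = RtoC (r ^ k).
Proof. induction k; simpl; [reflexivity|]. rewrite IHk, RtoC_mult. reflexivity. Qed.

Lemma Cpow_S (x : C) k : Cpow x (S k) = Cmult x (Cpow x k).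
Proof. reflexivity. Qed.

Lemma term_eq a b q x k : phi11_term a b q x k =
  Cmult (RtoC (sg q k)) (Cmult (Cdiv (qpoch a q k) (Cmult (qpoch b q k) (qpoch (RtoC q) q k))) (Cpow x k)).
Proof. reflexivity. Qed.

Lemma term_0 a b q x : phi11_term a b q x 0 = RtoC 1.
Proof. rewrite term_eq, sg_0, !qpoch_0. simpl. field. Qed.

Lemma RtoC_sg_S q k : RtoC (sg q (S k)) = Cmult (Copp (RtoC (q ^ k))) (RtoC (sg q k)).
Proof. rewrite sg_S, RtoC_mult, RtoC_opp. reflexivity. Qed.

Lemma G1_term q a b y k : 0 < q -> q < 1 -> good q b ->
  phi11_term a (Cmult b (RtoC q)) q y k =
  Cplus (Cmult (Cminus (RtoC 1) b) (phi11_term a b q y k))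
        (Cmult b (phi11_term a (Cmult b (RtoC q)) q (Cmult (RtoC q) y) k)).
Proof.
  intros h0 h1 hb.
  rewrite !term_eq, Cpow_mult, Cpow_R.
  assert (E : qpoch (Cmult b (RtoC q)) q k =
     Cdiv (Cmult (qpoch b q k) (Cminus (RtoC 1) (Cmult b (RtoC (q ^ k))))) (Cminus (RtoC 1) b)).
  { rewrite <- (qpoch_S b q k), (qpoch_shift b q k). field. apply (good_1 q); auto. }
  rewrite E.
  assert (n1 := good_1 q b hb). assert (n2 := hb k). assert (n3 := qpoch_neq0 q b k hb).
  assert (n4 := qpoch_neq0 q (RtoC q) k (good_q q h0 h1)).
  field; repeat split; auto.
Qed.

Ltac nz q h0 h1 :=
  repeat match goal with
  | hb : good q ?b |- _ =>
      let H1 := fresh "n" in let H2 := fresh "n" in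
      assert (H1 := good_1 q b hb); assert (H2 := good_shift q b hb); revert hb
  end.

Lemma G3_term q a b x j : 0 < q -> q < 1 -> good q b ->
  Cplus (Cminus (phi11_term a b q x (S j)) (phi11_term a b q (Cmult (RtoC q) x) (S j)))
   (Cmult x (Cminus (phi11_term a b q (Cmult (RtoC q) x) j)
        (Cmult (Cdiv (Cminus a b) (Cminus (RtoC 1) b))
           (phi11_term a (Cmult b (RtoC q)) q (Cmult (RtoC q) (Cmult (RtoC q) x)) j)))) = RtoC 0.
Proof.
  intros h0 h1 hb.
  rewrite !term_eq, !RtoC_sg_S, ?Cpow_S, ?Cpow_mult, ?Cpow_R.
  rewrite !(qpoch_S a q j), !(qpoch_S b q j), !(qpoch_S (RtoC q) q j).
  assert (E : qpoch (Cmult b (RtoC q)) q j =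
     Cdiv (Cmult (qpoch b q j) (Cminus (RtoC 1) (Cmult b (RtoC (q ^ j))))) (Cminus (RtoC 1) b)).
  { rewrite <- (qpoch_S b q j), (qpoch_shift b q j). field. apply (good_1 q); auto. }
  rewrite E, ?RtoC_pow_S.
  assert (n1 := good_1 q b hb). assert (n2 := hb j). assert (n3 := qpoch_neq0 q b j hb).
  assert (gq := good_q q h0 h1).
  assert (n4 := qpoch_neq0 q (RtoC q) j gq). assert (n5 := gq (S j)). rewrite RtoC_pow_S in n5.
  field; repeat split; auto.
Qed.

Lemma G4_term q u v x j : 0 < q -> q < 1 -> good q v ->
  Cplus (Cminus (phi11_term u v q x (S j)) (phi11_term u v q (Cmult (RtoC q) x) (S j)))
   (Cmult (Cdiv (Cmult x (Cminus (RtoC 1) u)) (Cminus (RtoC 1) v))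
        (phi11_term (Cmult u (RtoC q)) (Cmult v (RtoC q)) q (Cmult (RtoC q) x) j)) = RtoC 0.
Proof.
  intros h0 h1 hv.
  rewrite !term_eq, !RtoC_sg_S, ?Cpow_S, ?Cpow_mult, ?Cpow_R.
  rewrite !(qpoch_shift u q j), !(qpoch_shift v q j), !(qpoch_S (RtoC q) q j).
  assert (n1 := good_1 q v hv). assert (gv := good_shift q v hv).
  assert (n3 := qpoch_neq0 q _ j gv).
  assert (gq := good_q q h0 h1).
  assert (n4 := qpoch_neq0 q (RtoC q) j gq). assert (n5 := gq j).
  field; repeat split; auto.
Qed.

Lemma G2_term q u v x j : 0 < q -> q < 1 -> good q v ->
  Cplus (Cminus (Cminus (phi11_term (Cmult u (RtoC q)) (Cmult v (RtoC q)) q x (S j))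
                   (Cmult (Cminus (RtoC 1) v) (phi11_term u v q (Cmult (RtoC q) x) (S j))))
             (Cmult v (phi11_term (Cmult u (RtoC q)) (Cmult v (RtoC q)) q (Cmult (RtoC q) x) (S j))))
    (Cmult x (phi11_term (Cmult u (RtoC q)) (Cmult v (RtoC q)) q (Cmult (RtoC q) x) j)) = RtoC 0.
Proof.
  intros h0 h1 hv.
  rewrite !term_eq, !RtoC_sg_S, ?Cpow_S, ?Cpow_mult, ?Cpow_R.
  rewrite !(qpoch_shift u q j), !(qpoch_shift v q j), !(qpoch_S (RtoC q) q j).
  rewrite !(qpoch_S (Cmult u (RtoC q)) q j), !(qpoch_S (Cmult v (RtoC q)) q j).
  assert (n1 := good_1 q v hv). assert (gv := good_shift q v hv).
  assert (n3 := qpoch_neq0 q _ j gv). assert (n6 := gv j).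
  assert (gq := good_q q h0 h1).
  assert (n4 := qpoch_neq0 q (RtoC q) j gq). assert (n5 := gq j).
  field; repeat split; auto.
Qed.


Definition CL (u : nat -> C) (l : C) := filterlim u eventually (locally l).

Lemma CL_Clim u l : CL u l -> Clim u = l.
Proof.
  intro H. unfold Clim.
  assert (H1 : is_lim_seq (fun k => Re (u k)) (Re l) /\ is_lim_seq (fun k => Im (u k)) (Im l)).
  { split; apply (proj2 (filterlim_locally _ _)); intro eps;
    apply (filter_imp (fun n => ball l eps (u n))); try (exact (proj1 (filterlim_locally _ _) H eps));
    intros n Hn; [exact (proj1 Hn) | exact (proj2 Hn)]. }
  destruct H1 as [H1 H2].
  rewrite (is_lim_seq_unique _ _ H1), (is_lim_seq_unique _ _ H2). simpl.
  destruct l; reflexivity.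
Qed.

Lemma CL_norm u l (e : nat -> R) : (forall n, Cmod (Cminus (u n) l) <= e n) -> is_lim_seq e 0 -> CL u l.
Proof.
  intros He H. unfold CL. apply (proj2 (filterlim_locally _ _)). intro eps.
  assert (H' := proj1 (filterlim_locally _ _) H eps).
  destruct H' as [N HN]. exists N. intros n Hn.
  apply (norm_compat1 (K := C_AbsRing) (V := C_NormedModule)). change (norm (minus (u n) l)) with (Cmod (Cminus (u n) l)).
  specialize (HN n Hn). change (Rabs (e n - 0) < eps) in HN.
  specialize (He n). rewrite Rminus_0_r in HN. apply Rabs_lt_between in HN. lra.
Qed.

Lemma CL_unique u l m : CL u l -> CL u m -> l = m.
Proof. intros H1 H2. apply (filterlim_locally_unique (K := C_AbsRing) (V := C_NormedModule) u l m H1 H2). Qed.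

Lemma CL_plus u v l m : CL u l -> CL v m -> CL (fun n => Cplus (u n) (v n)) (Cplus l m).
Proof.
  intros H1 H2. unfold CL.
  eapply filterlim_comp_2; [exact H1 | exact H2 |].
  apply (filterlim_plus (K := C_AbsRing) (V := C_NormedModule) l m).
Qed.

Lemma CL_to_norm u l : CL u l -> is_lim_seq (fun n => Cmod (Cminus (u n) l)) 0.
Proof.
  intro H. apply (proj2 (filterlim_locally _ _)). intro eps.
  assert (hf : 0 < eps / norm_factor (K := C_AbsRing) (V := C_NormedModule)).
  { apply Rdiv_lt_0_compat. apply cond_pos. apply norm_factor_gt_0. }
  apply (filter_imp (fun n => ball l (mkposreal _ hf) (u n))).
  2: exact (proj1 (filterlim_locally _ _) H (mkposreal _ hf)).
  intros n Hn. apply (norm_compat2 (K := C_AbsRing) (V := C_NormedModule)) in Hn.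
  change (norm (minus (u n) l)) with (Cmod (Cminus (u n) l)) in Hn. simpl in Hn.
  change (Rabs (Cmod (Cminus (u n) l) - 0) < eps).
  rewrite Rminus_0_r, Rabs_pos_eq by apply Cmod_ge_0.
  assert (norm_factor (K := C_AbsRing) (V := C_NormedModule) * (eps / norm_factor (K := C_AbsRing) (V := C_NormedModule)) = eps).
  { field. apply Rgt_not_eq, norm_factor_gt_0. }
  lra.
Qed.

Lemma CL_mult u v l m : CL u l -> CL v m -> CL (fun n => Cmult (u n) (v n)) (Cmult l m).
Proof.
  intros H1 H2. apply CL_to_norm in H1. apply CL_to_norm in H2.
  apply (CL_norm _ _ (fun n => Cmod (Cminus (u n) l) * Cmod (Cminus (v n) m) + Cmod (Cminus (u n) l) * Cmod m
         + Cmod l * Cmod (Cminus (v n) m))).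
  - intro n. replace (Cminus (Cmult (u n) (v n)) (Cmult l m)) with
      (Cplus (Cplus (Cmult (Cminus (u n) l) (Cminus (v n) m)) (Cmult (Cminus (u n) l) m)) (Cmult l (Cminus (v n) m))) by ring.
    eapply Rle_trans. apply Cmod_triangle. rewrite Cmod_mult.
    apply Rplus_le_compat_r. eapply Rle_trans. apply Cmod_triangle. rewrite !Cmod_mult. lra.
  - replace (Finite 0) with (Finite (0 * 0 + 0 * Cmod m + Cmod l * 0)) by (f_equal; ring).
    apply is_lim_seq_plus'; [apply is_lim_seq_plus'|]; apply is_lim_seq_mult'; auto; apply is_lim_seq_const.
Qed.

Lemma CL_const c : CL (fun _ => c) c.
Proof. unfold CL. apply filterlim_const. Qed.

Lemma CL_ext u v l : (forall n, u n = v n) -> CL u l -> CL v l.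
Proof. intros H H1. unfold CL. exact (filterlim_ext _ _ H H1). Qed.

Lemma series_norm_le (u : nat -> C) l (v : nat -> R) s :
  is_series u l -> is_series v s -> (forall k, Cmod (u k) <= v k) -> Cmod l <= s.
Proof.
  intros Hu Hv Hle.
  assert (P : forall n, Cmod (sum_n u n) <= sum_n v n).
  { induction n.
    - rewrite !sum_O. auto.
    - rewrite !sum_Sn. eapply Rle_trans. apply (norm_triangle (K := C_AbsRing) (V := C_NormedModule)).
      change (Cmod (sum_n u n) + Cmod (u (S n)) <= plus (sum_n v n) (v (S n))).
      unfold plus; simpl. specialize (Hle (S n)). lra. }
  assert (L1 : is_lim_seq (fun n => Cmod (sum_n u n)) (Cmod l)).
  { unfold is_series in Hu. eapply filterlim_comp; [exact Hu|]. apply (filterlim_norm (K := C_AbsRing) (V := C_NormedModule)). }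
  assert (L2 : is_lim_seq (sum_n v) s) by exact Hv.
  exact (is_lim_seq_le _ _ _ _ P L1 L2).
Qed.


Lemma Cmod_1_minus (a : C) q j : 0 <= q -> Cmod (Cminus (RtoC 1) (Cmult a (RtoC (q ^ j)))) <= 1 + Cmod a * q ^ j.
Proof.
  intro h. unfold Cminus. eapply Rle_trans. apply Cmod_triangle.
  rewrite Cmod_opp, Cmod_mult, !Cmod_R, Rabs_R1, (Rabs_pos_eq (q^j)). lra.
  apply pow_le; auto.
Qed.

Lemma qpoch_upper a q k : 0 <= q -> q < 1 ->
  Cmod (qpoch a q k) <= exp (Cmod a * ((1 - q ^ k) / (1 - q))).
Proof.
  intros h0 h1. induction k.
  - rewrite qpoch_0, Cmod_1. simpl. replace (Cmod a * ((1 - 1) / (1 - q))) with 0 by (field; lra).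
    rewrite exp_0. lra.
  - rewrite qpoch_S, Cmod_mult.
    replace (Cmod a * ((1 - q ^ S k) / (1 - q))) with (Cmod a * ((1 - q ^ k) / (1 - q)) + Cmod a * q ^ k)
      by (simpl; field; lra).
    rewrite exp_plus. apply Rmult_le_compat; try apply Cmod_ge_0; auto.
    eapply Rle_trans. apply Cmod_1_minus; auto. apply exp_ineq1_le.
Qed.

Lemma qpoch_upper' a q k : 0 <= q -> q < 1 -> Cmod (qpoch a q k) <= exp (Cmod a / (1 - q)).
Proof.
  intros h0 h1. eapply Rle_trans. apply qpoch_upper; auto.
  destruct (Req_dec (Cmod a * ((1 - q ^ k) / (1 - q))) (Cmod a / (1 - q))) as [E|E].
  - rewrite E; lra.
  - left. apply exp_increasing.
    assert (0 <= q ^ k) by (apply pow_le; auto).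
    assert (0 <= Cmod a) by apply Cmod_ge_0.
    assert (Cmod a * ((1 - q ^ k) / (1 - q)) <= Cmod a / (1 - q)).
    { unfold Rdiv. rewrite <- Rmult_assoc. apply Rmult_le_compat_r.
      left; apply Rinv_0_lt_compat; lra. nra. }
    lra.
Qed.

Lemma delta_exists q b : 0 < q -> q < 1 -> good q b ->
  exists d, 0 < d <= 1 /\ forall j, d <= Cmod (Cminus (RtoC 1) (Cmult b (RtoC (q ^ j)))).
Proof.
  intros h0 h1 hb.
  assert (HJ : exists J, forall j, (J <= j)%nat -> Cmod b * q ^ j <= 1/2).
  { assert (L : is_lim_seq (fun j => Cmod b * q ^ j) 0).
    { replace (Finite 0) with (Rbar_mult (Cmod b) 0) by (simpl; f_equal; ring).
      apply is_lim_seq_scal_l. apply is_lim_seq_geom. rewrite Rabs_pos_eq; lra. }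
    assert (hh : 0 < 1/2) by lra.
    destruct (proj1 (filterlim_locally _ _) L (mkposreal _ hh)) as [J HJ].
    exists J. intros j Hj. specialize (HJ j Hj). change (Rabs (Cmod b * q ^ j - 0) < 1/2) in HJ.
    apply Rabs_lt_between in HJ. simpl. lra. }
  destruct HJ as [J HJ].
  assert (Hfin : forall N, exists d, 0 < d <= 1 /\ forall j, (j < N)%nat -> d <= Cmod (Cminus (RtoC 1) (Cmult b (RtoC (q ^ j))))).
  { induction N.
    - exists 1. split; [lra|]. intros j Hj; lia.
    - destruct IHN as [d [Hd Hj]].
      assert (P := proj1 (Cmod_gt_0 _) (hb N)).
      exists (Rmin d (Cmod (Cminus (RtoC 1) (Cmult b (RtoC (q ^ N)))))).
      split. split. apply Rmin_glb_lt; lra. eapply Rle_trans. apply Rmin_l. lra.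
      intros j Hj'. destruct (Nat.eq_dec j N) as [->|Hne].
      + apply Rmin_r.
      + eapply Rle_trans. apply Rmin_l. apply Hj. lia. }
  destruct (Hfin J) as [d [Hd Hdj]].
  exists (Rmin d (1/2)). split. split. apply Rmin_glb_lt; lra. eapply Rle_trans. apply Rmin_r. lra.
  intro j. destruct (Nat.lt_ge_cases j J) as [Hj|Hj].
  - eapply Rle_trans. apply Rmin_l. auto.
  - eapply Rle_trans. apply Rmin_r.
    specialize (HJ j Hj).
    assert (T : Cmod (RtoC 1) <= Cmod (Cminus (RtoC 1) (Cmult b (RtoC (q ^ j)))) + Cmod (Cmult b (RtoC (q ^ j)))).
    { replace (RtoC 1) with (Cplus (Cminus (RtoC 1) (Cmult b (RtoC (q ^ j)))) (Cmult b (RtoC (q ^ j)))) at 1 by ring.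
      apply Cmod_triangle. }
    rewrite Cmod_1, Cmod_mult, Cmod_R, Rabs_pos_eq in T by (apply pow_le; lra). lra.
Qed.

Lemma qpoch_lower q b d k : 0 <= d -> (forall j, d <= Cmod (Cminus (RtoC 1) (Cmult b (RtoC (q ^ j))))) ->
  d ^ k <= Cmod (qpoch b q k).
Proof.
  intros hd H. induction k.
  - rewrite qpoch_0, Cmod_1. simpl; lra.
  - rewrite qpoch_S, Cmod_mult. simpl. rewrite Rmult_comm. apply Rmult_le_compat; auto. apply pow_le; auto.
Qed.

Lemma qq_lower q j : 0 < q -> q < 1 -> 1 - q <= Cmod (Cminus (RtoC 1) (Cmult (RtoC q) (RtoC (q ^ j)))).
Proof.
  intros h0 h1. rewrite <- RtoC_mult. unfold Cminus. rewrite <- RtoC_opp, <- RtoC_plus, Cmod_R.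
  assert (H := pow_01 q j). assert (q * q ^ j <= q * 1) by (apply Rmult_le_compat_l; lra).
  rewrite Rabs_pos_eq; nra.
Qed.


Lemma Cmod_Cpow x k : Cmod (Cpow x k) = Cmod x ^ k.
Proof. induction k; simpl. apply Cmod_1. rewrite Cmod_mult, IHk. reflexivity. Qed.

Lemma Rabs_sg q k : 0 <= q -> Rabs (sg q k) = q ^ (k * (k - 1) / 2).
Proof.
  intro h. unfold sg. rewrite Rabs_mult, <- !RPow_abs. rewrite (Rabs_pos_eq q h). replace (Rabs (-1)) with 1 by (unfold Rabs; destruct Rcase_abs; lra). rewrite pow1. ring.
Qed.

Lemma term_bound q a b x d k : 0 < q -> q < 1 -> 0 < d -> good q b ->
  (forall j, d <= Cmod (Cminus (RtoC 1) (Cmult b (RtoC (q ^ j))))) ->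
  Cmod (phi11_term a b q x k) <= exp (Cmod a / (1 - q)) * (q ^ (k * (k - 1) / 2) * (Cmod x / (d * (1 - q))) ^ k).
Proof.
  intros h0 h1 hd hb Hd.
  rewrite term_eq, !Cmod_mult, Cmod_R, Rabs_sg by lra.
  assert (nb := qpoch_neq0 q b k hb). assert (nq := qpoch_neq0 q _ k (good_q q h0 h1)).
  rewrite Cmod_div by (apply Cmult_neq_0; auto). rewrite Cmod_mult, Cmod_Cpow.
  assert (LB := qpoch_lower q b d k (Rlt_le _ _ hd) Hd).
  assert (LQ := qpoch_lower q (RtoC q) (1 - q) k ltac:(lra) (fun j => qq_lower q j h0 h1)).
  assert (UA := qpoch_upper' a q k ltac:(lra) h1).
  set (A := Cmod (qpoch a q k)) in *. set (B := Cmod (qpoch b q k)) in *.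
  set (Q := Cmod (qpoch (RtoC q) q k)) in *. set (M := exp (Cmod a / (1 - q))) in *.
  assert (pdk : 0 < d ^ k) by (apply pow_lt; auto).
  assert (pqk : 0 < (1 - q) ^ k) by (apply pow_lt; lra).
  assert (pA : 0 <= A) by apply Cmod_ge_0.
  assert (pX : 0 <= Cmod x ^ k) by (apply pow_le; apply Cmod_ge_0).
  assert (pT : 0 <= q ^ (k * (k - 1) / 2)) by (apply pow_le; lra).
  unfold Rdiv. rewrite Rpow_mult_distr, pow_inv, Rpow_mult_distr.
  assert (pB : d ^ k * (1 - q) ^ k <= B * Q) by (apply Rmult_le_compat; lra).
  assert (iB : / (B * Q) <= / (d ^ k * (1 - q) ^ k)) by (apply Rinv_le_contravar; nra).
  assert (pi : 0 <= / (B * Q)) by (left; apply Rinv_0_lt_compat; nra).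
  assert (A * / (B * Q) <= M * / (d ^ k * (1 - q) ^ k)) by (apply Rmult_le_compat; lra).
  assert (Hfin : q ^ (k * (k - 1) / 2) * (A * / (B * Q) * Cmod x ^ k) <=
          q ^ (k * (k - 1) / 2) * (M * / (d ^ k * (1 - q) ^ k) * Cmod x ^ k)).
  { apply Rmult_le_compat_l; auto. apply Rmult_le_compat_r; auto. }
  eapply Rle_trans; [exact Hfin|]. right. ring.
Qed.

Lemma ex_series_tri q r : 0 < q -> q < 1 -> 0 <= r -> ex_series (fun k => q ^ (k * (k - 1) / 2) * r ^ k).
Proof.
  intros h0 h1 hR.
  assert (E : ex_series (fun k => Rabs (q ^ (k * (k - 1) / 2) * (r + 1) ^ k))).
  { apply (ex_series_DAlembert _ 0). lra.
    - intro n. apply Rmult_integral_contrapositive; split; apply pow_nonzero; lra.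
    - apply (is_lim_seq_ext (fun n => q ^ n * (r + 1))).
      + intro n. rewrite tri_S, pow_add. change ((r + 1) ^ S n) with ((r + 1) * (r + 1) ^ n).
        replace (q ^ (n * (n - 1) / 2) * q ^ n * ((r + 1) * (r + 1) ^ n) / (q ^ (n * (n - 1) / 2) * (r + 1) ^ n))
          with (q ^ n * (r + 1)).
        rewrite Rabs_pos_eq. reflexivity. apply Rmult_le_pos. apply pow_le; lra. lra.
        field. split; apply pow_nonzero; lra.
      + replace (Finite 0) with (Rbar_mult 0 (r + 1)) by (simpl; f_equal; ring).
        apply is_lim_seq_scal_r. apply is_lim_seq_geom. rewrite Rabs_pos_eq; lra. }
  apply ex_series_Rabs in E.
  apply (ex_series_le (K := R_AbsRing) (V := R_CompleteNormedModule) _ (fun k => q ^ (k * (k - 1) / 2) * (r + 1) ^ k)); [|exact E].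
  intro n. change (Rabs (q ^ (n * (n - 1) / 2) * r ^ n) <= q ^ (n * (n - 1) / 2) * (r + 1) ^ n).
  assert (0 <= q ^ (n * (n - 1) / 2)) by (apply pow_le; lra).
  rewrite Rabs_pos_eq by (apply Rmult_le_pos; auto; apply pow_le; lra).
  apply Rmult_le_compat_l; auto. apply pow_incr; lra.
Qed.


Lemma phi_series q a b x : 0 < q -> q < 1 -> good q b ->
  is_series (phi11_term a b q x) (phi11 a b q x).
Proof.
  intros h0 h1 hb.
  destruct (delta_exists q b h0 h1 hb) as [d [[hd0 hd1] Hd]].
  assert (pr : 0 <= Cmod x / (d * (1 - q))).
  { apply Rmult_le_pos. apply Cmod_ge_0. left; apply Rinv_0_lt_compat; nra. }
  assert (Ex : ex_series (phi11_term a b q x)).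
  { apply (ex_series_le (K := C_AbsRing) (V := C_CompleteNormedModule) _
      (fun k => exp (Cmod a / (1 - q)) * (q ^ (k * (k - 1) / 2) * (Cmod x / (d * (1 - q))) ^ k))).
    - intro n. apply term_bound; auto.
    - apply (ex_series_scal_l (K := R_AbsRing) (V := R_NormedModule)). apply ex_series_tri; auto. }
  destruct Ex as [l Hl].
  unfold phi11. rewrite (CL_Clim _ l); auto.
Qed.

Lemma phi_cont q a b x : 0 < q -> q < 1 -> good q b ->
  CL (fun n => phi11 a b q (Cmult (RtoC (q ^ n)) x)) (RtoC 1).
Proof.
  intros h0 h1 hb.
  destruct (delta_exists q b h0 h1 hb) as [d [[hd0 hd1] Hd]].
  set (r := Rmax 1 (Cmod x)).
  set (c := / (d * (1 - q))).
  set (M := exp (Cmod a / (1 - q))).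
  assert (pc : 0 < c) by (apply Rinv_0_lt_compat; nra).
  assert (pr : 1 <= r) by apply Rmax_l.
  assert (pM : 0 < M) by apply exp_pos.
  set (g := fun j : nat => M * (c * (q ^ (j * (j - 1) / 2) * (c * r) ^ j))).
  assert (Eg : ex_series g).
  { apply (ex_series_scal_l (K := R_AbsRing) (V := R_NormedModule)).
    apply (ex_series_scal_l (K := R_AbsRing) (V := R_NormedModule)). apply ex_series_tri; nra. }
  set (G := Series g).
  assert (Hg : is_series g G) by (apply Series_correct; auto).
  assert (Bnd : forall w, Cmod w <= r -> Cmod (Cminus (phi11 a b q w) (RtoC 1)) <= Cmod w * G).
  { intros w hw.
    assert (S1 : is_series (fun j => phi11_term a b q w (S j)) (Cminus (phi11 a b q w) (RtoC 1))).
    { apply is_series_incr_1. rewrite term_0.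
      replace (plus _ _) with (phi11 a b q w).
      apply phi_series; auto. change (phi11 a b q w = Cplus (Cminus (phi11 a b q w) (RtoC 1)) (RtoC 1)). ring. }
    apply (series_norm_le (fun j => phi11_term a b q w (S j)) _ (fun j => Cmod w * g j)); auto.
    - apply (is_series_scal_l (K := R_AbsRing) (V := R_NormedModule)). exact Hg.
    - intro j. eapply Rle_trans. apply (term_bound q a b w d (S j)); auto.
      fold M. unfold g. rewrite tri_S, pow_add.
      assert (pw : 0 <= Cmod w) by apply Cmod_ge_0.
      assert (q1 : 0 <= q ^ j <= 1) by (apply pow_01; lra).
      assert (pt : 0 <= q ^ (j * (j - 1) / 2)) by (apply pow_le; lra).
      replace (Cmod w / (d * (1 - q))) with (c * Cmod w) by (unfold c, Rdiv; ring).
      change ((c * Cmod w) ^ S j) with ((c * Cmod w) * (c * Cmod w) ^ j).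
      rewrite !Rpow_mult_distr.
      assert (wr : Cmod w ^ j <= r ^ j) by (apply pow_incr; lra).
      assert (pcj : 0 <= c ^ j) by (apply pow_le; lra).
      assert (pwj : 0 <= Cmod w ^ j) by (apply pow_le; lra).
      assert (K1 : q ^ (j * (j - 1) / 2) * q ^ j * (c * Cmod w * (c ^ j * Cmod w ^ j))
               <= q ^ (j * (j - 1) / 2) * 1 * (c * Cmod w * (c ^ j * r ^ j))).
      { assert (A1 : q ^ (j * (j - 1) / 2) * q ^ j <= q ^ (j * (j - 1) / 2) * 1) by (apply Rmult_le_compat_l; lra).
        assert (A2 : c * Cmod w * (c ^ j * Cmod w ^ j) <= c * Cmod w * (c ^ j * r ^ j)).
        { apply Rmult_le_compat_l. nra. apply Rmult_le_compat_l; nra. }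
        apply Rmult_le_compat; auto. apply Rmult_le_pos; nra. apply Rmult_le_pos; nra. }
      assert (K2 := Rmult_le_compat_l M _ _ (Rlt_le _ _ pM) K1).
      eapply Rle_trans; [exact K2|]. right; ring. }
  apply (CL_norm _ _ (fun n => q ^ n * Cmod x * G)).
  - intro n. eapply Rle_trans. apply Bnd.
    + rewrite Cmod_mult, Cmod_R, Rabs_pos_eq by (apply pow_le; lra).
      assert (H := pow_01 q n). assert (0 <= Cmod x) by apply Cmod_ge_0.
      unfold r. eapply Rle_trans; [|apply Rmax_r]. nra.
    + rewrite Cmod_mult, Cmod_R, Rabs_pos_eq by (apply pow_le; lra). lra.
  - replace (Finite 0) with (Rbar_mult 0 (Cmod x * G)) by (simpl; f_equal; ring).
    apply (is_lim_seq_ext (fun n => q ^ n * (Cmod x * G))). intro; ring.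
    apply is_lim_seq_scal_r. apply is_lim_seq_geom. rewrite Rabs_pos_eq; lra.
Qed.


Lemma series_zero (u : nat -> C) l : is_series u l -> (forall k, u k = RtoC 0) -> l = RtoC 0.
Proof.
  intros H Hz.
  assert (H0 : is_series u (RtoC 0)).
  { unfold is_series. apply (filterlim_ext (fun _ => RtoC 0)).
    - intro n. induction n. rewrite sum_O, Hz; reflexivity.
      rewrite sum_Sn, <- IHn, Hz. change (RtoC 0 = Cplus (RtoC 0) (RtoC 0)). ring.
    - apply filterlim_const. }
  exact (filterlim_locally_unique (K := C_AbsRing) (V := C_NormedModule) _ l (RtoC 0) H H0).
Qed.

Lemma is_series_Cscal (c : C) u l : is_series u l -> is_series (fun k => Cmult c (u k)) (Cmult c l).
Proof. intro H. exact (is_series_scal_l (K := C_AbsRing) (V := C_NormedModule) c u l H). Qed.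

Lemma is_series_Cplus u v l m : is_series u l -> is_series v m ->
  is_series (fun k => Cplus (u k) (v k)) (Cplus l m).
Proof. intros H1 H2. exact (is_series_plus (K := C_AbsRing) (V := C_NormedModule) u v l m H1 H2). Qed.

Lemma is_series_Cshift (x : C) u l : is_series u l ->
  is_series (fun k => match k with O => RtoC 0 | S j => Cmult x (u j) end) (Cmult x l).
Proof.
  intro H. apply (is_series_decr_1 (K := C_AbsRing) (V := C_NormedModule)).
  replace (plus _ _) with (Cmult x l).
  apply is_series_Cscal; auto.
  change (Cmult x l = Cplus (Cmult x l) (Copp (RtoC 0))). ring.
Qed.

Lemma sub0 (x y : C) : Cplus x (Cmult (RtoC (-1)) y) = RtoC 0 -> x = y.
Proof.
  intro H. assert (E : RtoC (-1) = Copp (RtoC 1)) by (apply injective_projections; simpl; lra).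
  rewrite E in H. replace x with (Cplus (Cplus x (Cmult (Copp (RtoC 1)) y)) y) by ring.
  rewrite H. ring.
Qed.

Lemma G1 q a b y : 0 < q -> q < 1 -> good q b ->
  phi11 a (Cmult b (RtoC q)) q y =
  Cplus (Cmult (Cminus (RtoC 1) b) (phi11 a b q y))
        (Cmult b (phi11 a (Cmult b (RtoC q)) q (Cmult (RtoC q) y))).
Proof.
  intros h0 h1 hb. assert (hbq := good_shift q b hb).
  assert (HS := is_series_Cplus _ _ _ _ (phi_series q a _ y h0 h1 hbq)
    (is_series_Cscal (RtoC (-1)) _ _ (is_series_Cplus _ _ _ _
      (is_series_Cscal (Cminus (RtoC 1) b) _ _ (phi_series q a b y h0 h1 hb))
      (is_series_Cscal b _ _ (phi_series q a _ (Cmult (RtoC q) y) h0 h1 hbq))))).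
  apply series_zero in HS.
  - apply sub0. exact HS.
  - intro k. simpl. rewrite (G1_term q a b y k h0 h1 hb). ring.
Qed.

Lemma sub0' (x y : C) : Cplus x (Copp y) = RtoC 0 -> x = y.
Proof. intro H. replace x with (Cplus (Cplus x (Copp y)) y) by ring. rewrite H. ring. Qed.

Lemma is_series_Copp u l : is_series u l -> is_series (fun k => Copp (u k)) (Copp l).
Proof. intro H. exact (is_series_opp (K := C_AbsRing) (V := C_NormedModule) u l H). Qed.

Lemma G3 q a b x : 0 < q -> q < 1 -> good q b ->
  phi11 a b q x =
  Cplus (phi11 a b q (Cmult (RtoC q) x))
    (Cmult x (Cplus (Copp (phi11 a b q (Cmult (RtoC q) x)))
                    (Cmult (Cdiv (Cminus a b) (Cminus (RtoC 1) b))
                           (phi11 a (Cmult b (RtoC q)) q (Cmult (RtoC q) (Cmult (RtoC q) x)))))).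
Proof.
  intros h0 h1 hb. assert (hbq := good_shift q b hb).
  assert (HS := is_series_Cplus _ _ _ _ (phi_series q a b x h0 h1 hb)
    (is_series_Copp _ _ (is_series_Cplus _ _ _ _
      (phi_series q a b (Cmult (RtoC q) x) h0 h1 hb)
      (is_series_Cshift x _ _ (is_series_Cplus _ _ _ _
         (is_series_Copp _ _ (phi_series q a b (Cmult (RtoC q) x) h0 h1 hb))
         (is_series_Cscal (Cdiv (Cminus a b) (Cminus (RtoC 1) b)) _ _
             (phi_series q a _ (Cmult (RtoC q) (Cmult (RtoC q) x)) h0 h1 hbq))))))).
  apply series_zero in HS.
  - apply sub0'. exact HS.
  - intro k. destruct k as [|j]; simpl.
    + rewrite !term_0. ring.
    + transitivity (Cplus (Cminus (phi11_term a b q x (S j)) (phi11_term a b q (Cmult (RtoC q) x) (S j)))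
       (Cmult x (Cminus (phi11_term a b q (Cmult (RtoC q) x) j)
        (Cmult (Cdiv (Cminus a b) (Cminus (RtoC 1) b))
           (phi11_term a (Cmult b (RtoC q)) q (Cmult (RtoC q) (Cmult (RtoC q) x)) j))))).
      * ring.
      * apply G3_term; auto.
Qed.

Lemma G4 q u v x : 0 < q -> q < 1 -> good q v ->
  phi11 u v q x =
  Cplus (phi11 u v q (Cmult (RtoC q) x))
    (Copp (Cmult (Cdiv (Cmult x (Cminus (RtoC 1) u)) (Cminus (RtoC 1) v))
        (phi11 (Cmult u (RtoC q)) (Cmult v (RtoC q)) q (Cmult (RtoC q) x)))).
Proof.
  intros h0 h1 hv. assert (hvq := good_shift q v hv).
  assert (HS := is_series_Cplus _ _ _ _ (phi_series q u v x h0 h1 hv)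
    (is_series_Copp _ _ (is_series_Cplus _ _ _ _
      (phi_series q u v (Cmult (RtoC q) x) h0 h1 hv)
      (is_series_Copp _ _ (is_series_Cshift (Cdiv (Cmult x (Cminus (RtoC 1) u)) (Cminus (RtoC 1) v)) _ _
         (phi_series q (Cmult u (RtoC q)) _ (Cmult (RtoC q) x) h0 h1 hvq)))))).
  apply series_zero in HS.
  - apply sub0'. exact HS.
  - intro k. destruct k as [|j]; simpl.
    + rewrite !term_0. ring.
    + transitivity (Cplus (Cminus (phi11_term u v q x (S j)) (phi11_term u v q (Cmult (RtoC q) x) (S j)))
         (Cmult (Cdiv (Cmult x (Cminus (RtoC 1) u)) (Cminus (RtoC 1) v))
           (phi11_term (Cmult u (RtoC q)) (Cmult v (RtoC q)) q (Cmult (RtoC q) x) j))).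
      * ring.
      * apply G4_term; auto.
Qed.

Lemma G2 q u v x : 0 < q -> q < 1 -> good q v ->
  phi11 (Cmult u (RtoC q)) (Cmult v (RtoC q)) q x =
  Cplus (Cplus (Cmult (Cminus (RtoC 1) v) (phi11 u v q (Cmult (RtoC q) x)))
               (Cmult v (phi11 (Cmult u (RtoC q)) (Cmult v (RtoC q)) q (Cmult (RtoC q) x))))
        (Copp (Cmult x (phi11 (Cmult u (RtoC q)) (Cmult v (RtoC q)) q (Cmult (RtoC q) x)))).
Proof.
  intros h0 h1 hv. assert (hvq := good_shift q v hv).
  assert (HS := is_series_Cplus _ _ _ _ (phi_series q (Cmult u (RtoC q)) _ x h0 h1 hvq)
    (is_series_Copp _ _ (is_series_Cplus _ _ _ _
      (is_series_Cplus _ _ _ _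
        (is_series_Cscal (Cminus (RtoC 1) v) _ _ (phi_series q u v (Cmult (RtoC q) x) h0 h1 hv))
        (is_series_Cscal v _ _ (phi_series q (Cmult u (RtoC q)) _ (Cmult (RtoC q) x) h0 h1 hvq)))
      (is_series_Copp _ _ (is_series_Cshift x _ _
         (phi_series q (Cmult u (RtoC q)) _ (Cmult (RtoC q) x) h0 h1 hvq)))))).
  apply series_zero in HS.
  - apply sub0'. exact HS.
  - intro k. destruct k as [|j]; simpl.
    + rewrite !term_0. ring.
    + transitivity (Cplus (Cminus (Cminus (phi11_term (Cmult u (RtoC q)) (Cmult v (RtoC q)) q x (S j))
                   (Cmult (Cminus (RtoC 1) v) (phi11_term u v q (Cmult (RtoC q) x) (S j))))
             (Cmult v (phi11_term (Cmult u (RtoC q)) (Cmult v (RtoC q)) q (Cmult (RtoC q) x) (S j))))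
    (Cmult x (phi11_term (Cmult u (RtoC q)) (Cmult v (RtoC q)) q (Cmult (RtoC q) x) j))).
      * ring.
      * apply G2_term; auto.
Qed.


Lemma qpoch_conv q x : 0 < q -> q < 1 -> CL (qpoch x q) (qpoch_inf x q).
Proof.
  intros h0 h1.
  set (e := fun k => match k with O => RtoC 1 | S j => Copp (Cmult (qpoch x q j) (Cmult x (RtoC (q ^ j)))) end).
  set (M := exp (Cmod x / (1 - q))).
  assert (Hs : forall n, sum_n e n = qpoch x q n).
  { induction n. rewrite sum_O. reflexivity.
    rewrite sum_Sn, IHn, qpoch_S. change (Cplus (qpoch x q n) (Copp (Cmult (qpoch x q n) (Cmult x (RtoC (q ^ n)))))
       = Cmult (qpoch x q n) (Cminus (RtoC 1) (Cmult x (RtoC (q ^ n))))). ring. }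
  assert (Ex : ex_series e).
  { apply (ex_series_le (K := C_AbsRing) (V := C_CompleteNormedModule) _
      (fun k => match k with O => 1 | S j => M * Cmod x * q ^ j end)).
    - intro k. destruct k as [|j]; simpl.
      + change (Cmod (RtoC 1) <= 1). rewrite Cmod_1. lra.
      + change (Cmod (Copp (Cmult (qpoch x q j) (Cmult x (RtoC (q ^ j))))) <= M * Cmod x * q ^ j).
        rewrite Cmod_opp, !Cmod_mult, Cmod_R, Rabs_pos_eq by (apply pow_le; lra).
        assert (H := qpoch_upper' x q j ltac:(lra) h1). fold M in H.
        assert (0 <= Cmod x * q ^ j) by (apply Rmult_le_pos; [apply Cmod_ge_0 | apply pow_le; lra]).
        rewrite Rmult_assoc. apply Rmult_le_compat_r; auto.
    - apply (ex_series_incr_1 (K := R_AbsRing) (V := R_NormedModule)).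
      apply (ex_series_scal_l (K := R_AbsRing) (V := R_NormedModule)). apply ex_series_geom. rewrite Rabs_pos_eq; lra. }
  destruct Ex as [l Hl].
  assert (H : CL (qpoch x q) l).
  { unfold CL. unfold is_series in Hl. exact (filterlim_ext _ _ Hs Hl). }
  unfold qpoch_inf. rewrite (CL_Clim _ _ H). exact H.
Qed.

Lemma CL_shift u l : CL u l -> CL (fun n => u (S n)) l.
Proof.
  intro H. unfold CL. eapply filterlim_comp; [|exact H].
  apply eventually_subseq. intro n; lia.
Qed.

Lemma qpoch_inf_rec q x : 0 < q -> q < 1 ->
  qpoch_inf x q = Cmult (Cminus (RtoC 1) x) (qpoch_inf (Cmult x (RtoC q)) q).
Proof.
  intros h0 h1.
  assert (H1 := CL_shift _ _ (qpoch_conv q x h0 h1)).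
  assert (H2 := CL_mult _ _ _ _ (CL_const (Cminus (RtoC 1) x)) (qpoch_conv q (Cmult x (RtoC q)) h0 h1)).
  apply (CL_unique _ _ _ H1). apply (CL_ext _ _ _ (fun n => eq_sym (qpoch_shift x q n))). exact H2.
Qed.

Lemma iter_prod q c (G : C -> C) z : 0 < q -> q < 1 ->
  (forall w, G w = Cmult (Cminus (RtoC 1) (Cmult c w)) (G (Cmult (RtoC q) w))) ->
  CL (fun n => G (Cmult (RtoC (q ^ n)) z)) (RtoC 1) ->
  G z = qpoch_inf (Cmult c z) q.
Proof.
  intros h0 h1 HG HL.
  assert (E : forall n, G z = Cmult (qpoch (Cmult c z) q n) (G (Cmult (RtoC (q ^ n)) z))).
  { induction n.
    - rewrite qpoch_0. change (q ^ 0) with 1. replace (Cmult (RtoC 1) z) with z by ring. ring.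
    - rewrite IHn, HG, qpoch_S, RtoC_pow_S.
      replace (Cmult (RtoC q) (Cmult (RtoC (q ^ n)) z)) with (Cmult (Cmult (RtoC q) (RtoC (q ^ n))) z) by ring.
      ring. }
  assert (H := CL_mult _ _ _ _ (qpoch_conv q (Cmult c z) h0 h1) HL).
  rewrite Cmult_1_r in H.
  apply (CL_unique (fun _ => G z)). apply CL_const.
  apply (CL_ext _ _ _ (fun n => eq_sym (E n))). exact H.
Qed.

Lemma qpoch_split q b J m : qpoch b q (J + m) = Cmult (qpoch b q J) (qpoch (Cmult b (RtoC (q ^ J))) q m).
Proof.
  induction m.
  - rewrite Nat.add_0_r, qpoch_0. ring.
  - rewrite Nat.add_succ_r, !qpoch_S, IHm, pow_add, RtoC_mult. ring.
Qed.

Lemma qpoch_tail_lower q w m : 0 < q -> q < 1 -> Cmod w <= (1 - q) / 2 ->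
  1 - Cmod w * ((1 - q ^ m) / (1 - q)) <= Cmod (qpoch w q m).
Proof.
  intros h0 h1 hw. induction m.
  - rewrite qpoch_0, Cmod_1. simpl. replace ((1 - 1) / (1 - q)) with 0 by (field; lra). lra.
  - rewrite qpoch_S, Cmod_mult.
    assert (pm := pow_01 q m ltac:(lra) ltac:(lra)).
    assert (pw : 0 <= Cmod w) by apply Cmod_ge_0.
    assert (T : 1 - Cmod w * q ^ m <= Cmod (Cminus (RtoC 1) (Cmult w (RtoC (q ^ m))))).
    { assert (T0 : Cmod (RtoC 1) <= Cmod (Cminus (RtoC 1) (Cmult w (RtoC (q ^ m)))) + Cmod (Cmult w (RtoC (q ^ m)))).
      { replace (RtoC 1) with (Cplus (Cminus (RtoC 1) (Cmult w (RtoC (q ^ m)))) (Cmult w (RtoC (q ^ m)))) at 1 by ring.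
        apply Cmod_triangle. }
      rewrite Cmod_1, Cmod_mult, Cmod_R, Rabs_pos_eq in T0 by lra. lra. }
    assert (L1 : 0 <= 1 - Cmod w * ((1 - q ^ m) / (1 - q))).
    { assert (Cmod w * ((1 - q ^ m) / (1 - q)) <= (1 - q) / 2 * (1 / (1 - q))).
      { apply Rmult_le_compat; auto. apply Rmult_le_pos. lra. left; apply Rinv_0_lt_compat; lra.
        unfold Rdiv. apply Rmult_le_compat_r. left; apply Rinv_0_lt_compat; lra. lra. }
      replace ((1 - q) / 2 * (1 / (1 - q))) with (1/2) in H by (field; lra). lra. }
    assert (L2 : 0 <= 1 - Cmod w * q ^ m).
    { assert (Cmod w * q ^ m <= Cmod w * 1) by (apply Rmult_le_compat_l; lra). lra. }
    replace (1 - Cmod w * ((1 - q ^ S m) / (1 - q))) with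
      (1 - Cmod w * ((1 - q ^ m) / (1 - q)) - Cmod w * q ^ m) by (simpl; field; lra).
    assert (A := Rmult_le_compat _ _ _ _ L1 L2 IHm T).
    assert (B : (1 - Cmod w * ((1 - q ^ m) / (1 - q))) * (1 - Cmod w * q ^ m) >=
                1 - Cmod w * ((1 - q ^ m) / (1 - q)) - Cmod w * q ^ m).
    { assert (1 - Cmod w * ((1 - q ^ m) / (1 - q)) <= 1).
      { assert (0 <= Cmod w * ((1 - q ^ m) / (1 - q))); [|lra].
        apply Rmult_le_pos; auto. apply Rmult_le_pos. lra. left; apply Rinv_0_lt_compat; lra. }
      set (LL := 1 - Cmod w * ((1 - q ^ m) / (1 - q))) in *. set (t := Cmod w * q ^ m) in *.
      assert (0 <= t) by (unfold t; apply Rmult_le_pos; lra).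
      assert (0 <= t * (1 - LL)) by (apply Rmult_le_pos; lra).
      replace (LL * (1 - t)) with (LL - t + t * (1 - LL)) by ring. lra. }
    lra.
Qed.

Lemma qpoch_inf_neq0 q b : 0 < q -> q < 1 -> good q b -> qpoch_inf b q <> RtoC 0.
Proof.
  intros h0 h1 hb.
  assert (HJ : exists J, Cmod b * q ^ J <= (1 - q) / 2).
  { assert (L : is_lim_seq (fun j => Cmod b * q ^ j) 0).
    { replace (Finite 0) with (Rbar_mult (Cmod b) 0) by (simpl; f_equal; ring).
      apply is_lim_seq_scal_l. apply is_lim_seq_geom. rewrite Rabs_pos_eq; lra. }
    assert (hh : 0 < (1 - q) / 2) by lra.
    destruct (proj1 (filterlim_locally _ _) L (mkposreal _ hh)) as [J HJ].
    exists J. specialize (HJ J (le_n _)). change (Rabs (Cmod b * q ^ J - 0) < (1 - q) / 2) in HJ.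
    apply Rabs_lt_between in HJ. simpl in HJ. lra. }
  destruct HJ as [J HJ].
  set (w := Cmult b (RtoC (q ^ J))).
  assert (hw : Cmod w <= (1 - q) / 2).
  { unfold w. rewrite Cmod_mult, Cmod_R, Rabs_pos_eq; auto. apply pow_le; lra. }
  set (k := Cmod (qpoch b q J)).
  assert (pk : 0 < k) by (apply Cmod_gt_0, qpoch_neq0; auto).
  assert (Lb : forall m, k * (1/2) <= Cmod (qpoch b q (m + J))).
  { intro m. rewrite Nat.add_comm, qpoch_split, Cmod_mult. fold w. fold k.
    apply Rmult_le_compat_l. lra.
    eapply Rle_trans; [|apply qpoch_tail_lower; auto].
    assert (pm := pow_01 q m ltac:(lra) ltac:(lra)).
    assert (Cmod w * ((1 - q ^ m) / (1 - q)) <= (1 - q) / 2 * (1 / (1 - q))).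
    { apply Rmult_le_compat; auto. apply Cmod_ge_0. apply Rmult_le_pos. lra. left; apply Rinv_0_lt_compat; lra.
      unfold Rdiv. apply Rmult_le_compat_r. left; apply Rinv_0_lt_compat; lra. lra. }
    replace ((1 - q) / 2 * (1 / (1 - q))) with (1/2) in H by (field; lra). lra. }
  assert (Hc := qpoch_conv q b h0 h1).
  assert (Ln : is_lim_seq (fun n => Cmod (qpoch b q n)) (Cmod (qpoch_inf b q))).
  { unfold CL in Hc. eapply filterlim_comp; [exact Hc|]. apply (filterlim_norm (K := C_AbsRing) (V := C_NormedModule)). }
  apply (is_lim_seq_incr_n _ J) in Ln.
  assert (Le := is_lim_seq_le _ _ _ _ Lb (is_lim_seq_const _) Ln). simpl in Le.
  intro E. rewrite E, Cmod_0 in Le. lra.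
Qed.


Lemma good_from q s : 0 < q -> (forall j : nat, qpow q (Cplus s (RtoC (INR j))) <> RtoC 1) -> good q (qpow q s).
Proof.
  intros h0 Hj j H. apply (Hj j). rewrite qpow_add, qpow_nat by auto.
  replace (Cmult (qpow q s) (RtoC (q ^ j))) with (Cminus (RtoC 1) (Cminus (RtoC 1) (Cmult (qpow q s) (RtoC (q ^ j))))) by ring.
  rewrite H. ring.
Qed.

Lemma hga_1 q ga : (forall m : Z, qpow q ga <> qpow q (RtoC (IZR m))) ->
  forall j : nat, qpow q (Cplus ga (RtoC (INR j))) <> RtoC 1.
Proof.
  intros hga j H. apply (hga (- Z.of_nat j)%Z).
  rewrite opp_IZR, <- INR_IZR_INZ, RtoC_opp.
  rewrite (qpow_ext q ga (Cplus (Cplus ga (RtoC (INR j))) (Copp (RtoC (INR j))))) by ring.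
  rewrite qpow_add, H. ring.
Qed.

Lemma hga_2 q ga : 0 < q -> (forall m : Z, qpow q ga <> qpow q (RtoC (IZR m))) ->
  forall j : nat, qpow q (Cplus (Cminus (RtoC 1) ga) (RtoC (INR j))) <> RtoC 1.
Proof.
  intros h0 hga j H. apply (hga (Z.of_nat (S j))).
  rewrite <- INR_IZR_INZ.
  rewrite (qpow_ext q (RtoC (INR (S j))) (Cplus ga (Cplus (Cminus (RtoC 1) ga) (RtoC (INR j))))).
  - rewrite qpow_add, H. ring.
  - rewrite S_INR. unfold RtoC, Cplus, Cminus, Copp; simpl. apply injective_projections; simpl; ring.
Qed.

Lemma phi_arg a b q x y : x = y -> phi11 a b q x = phi11 a b q y.
Proof. intros ->; reflexivity. Qed.

Lemma CL_qn q z : 0 < q -> q < 1 -> CL (fun n => Cmult (RtoC (q ^ n)) z) (RtoC 0).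
Proof.
  intros h0 h1. apply (CL_norm _ _ (fun n => q ^ n * Cmod z)).
  - intro n. replace (Cminus (Cmult (RtoC (q ^ n)) z) (RtoC 0)) with (Cmult (RtoC (q ^ n)) z) by ring.
    rewrite Cmod_mult, Cmod_R, Rabs_pos_eq by (apply pow_le; lra). lra.
  - replace (Finite 0) with (Rbar_mult 0 (Cmod z)) by (simpl; f_equal; ring).
    apply is_lim_seq_scal_r. apply is_lim_seq_geom. rewrite Rabs_pos_eq; lra.
Qed.

Lemma phi_cont' q a b s z : 0 < q -> q < 1 -> good q b ->
  CL (fun n => phi11 a b q (Cmult s (Cmult (RtoC (q ^ n)) z))) (RtoC 1).
Proof.
  intros h0 h1 hb. apply (CL_ext (fun n => phi11 a b q (Cmult (RtoC (q ^ n)) (Cmult s z)))).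
  - intro n. apply phi_arg. ring.
  - apply phi_cont; auto.
Qed.

Lemma part2_core q a b u v s t r z : 0 < q -> q < 1 -> good q b -> good q v ->
  a <> RtoC 0 -> b <> RtoC 0 -> Cminus (RtoC 1) r <> RtoC 0 ->
  Cmult u b = a -> Cmult v b = RtoC q -> Cmult s a = b -> Cmult t a = RtoC q -> Cmult r (RtoC q) = b ->
  Cplus (Cmult (phi11 a b q (Cmult s z)) (phi11 u v q (Cmult t z)))
   (Cmult (Cdiv (Cmult (Cmult r (Cminus (RtoC 1) s)) z) (Cmult (Cminus (RtoC 1) r) (Cminus (RtoC 1) b)))
     (Cmult (phi11 a (Cmult b (RtoC q)) q (Cmult (Cmult s (RtoC q)) z))
            (phi11 (Cmult u (RtoC q)) (Cmult v (RtoC q)) q (Cmult t z))))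
  = qpoch_inf z q.
Proof.
  intros h0 h1 hb hv ha hb0 hr Hu Hv Hs Ht Hr.
  set (K := Cmult (Cmult r (Cminus (RtoC 1) s))).
  set (Dn := Cmult (Cminus (RtoC 1) r) (Cminus (RtoC 1) b)).
  set (F := fun w => Cplus (Cmult (phi11 a b q (Cmult s w)) (phi11 u v q (Cmult t w)))
   (Cmult (Cdiv (K w) Dn)
     (Cmult (phi11 a (Cmult b (RtoC q)) q (Cmult (Cmult s (RtoC q)) w))
            (phi11 (Cmult u (RtoC q)) (Cmult v (RtoC q)) q (Cmult t w))))).
  change (F z = qpoch_inf z q).
  replace (qpoch_inf z q) with (qpoch_inf (Cmult (RtoC 1) z) q) by (f_equal; ring).
  assert (hv1 := good_1 q v hv). assert (hb1 := good_1 q b hb).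
  assert (hq : RtoC q <> RtoC 0) by (intro E; injection E; lra).
  apply iter_prod; auto.
  - intro w. unfold F.
    assert (RA := G3 q a b (Cmult s w) h0 h1 hb).
    rewrite (phi_arg a b q (Cmult (RtoC q) (Cmult s w)) (Cmult s (Cmult (RtoC q) w))) in RA by ring.
    rewrite (phi_arg a (Cmult b (RtoC q)) q (Cmult (RtoC q) (Cmult (RtoC q) (Cmult s w)))
       (Cmult (Cmult s (RtoC q)) (Cmult (RtoC q) w))) in RA by ring.
    assert (RC := G1 q a b (Cmult (Cmult s (RtoC q)) w) h0 h1 hb).
    rewrite (phi_arg a b q (Cmult (Cmult s (RtoC q)) w) (Cmult s (Cmult (RtoC q) w))) in RC by ring.
    rewrite (phi_arg a (Cmult b (RtoC q)) q (Cmult (RtoC q) (Cmult (Cmult s (RtoC q)) w))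
       (Cmult (Cmult s (RtoC q)) (Cmult (RtoC q) w))) in RC by ring.
    assert (RB := G4 q u v (Cmult t w) h0 h1 hv).
    rewrite (phi_arg u v q (Cmult (RtoC q) (Cmult t w)) (Cmult t (Cmult (RtoC q) w))) in RB by ring.
    rewrite (phi_arg (Cmult u (RtoC q)) (Cmult v (RtoC q)) q (Cmult (RtoC q) (Cmult t w)) (Cmult t (Cmult (RtoC q) w))) in RB by ring.
    assert (RD := G2 q u v (Cmult t w) h0 h1 hv).
    rewrite (phi_arg u v q (Cmult (RtoC q) (Cmult t w)) (Cmult t (Cmult (RtoC q) w))) in RD by ring.
    rewrite (phi_arg (Cmult u (RtoC q)) (Cmult v (RtoC q)) q (Cmult (RtoC q) (Cmult t w)) (Cmult t (Cmult (RtoC q) w))) in RD by ring.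
    rewrite RA, RC, RB, RD. unfold K, Dn.
    assert (Eu : u = Cdiv a b) by (rewrite <- Hu; field; auto).
    assert (Ev : v = Cdiv (RtoC q) b) by (rewrite <- Hv; field; auto).
    assert (Es : s = Cdiv b a) by (rewrite <- Hs; field; auto).
    assert (Et : t = Cdiv (RtoC q) a) by (rewrite <- Ht; field; auto).
    assert (Er : r = Cdiv b (RtoC q)) by (rewrite <- Hr; field; auto).
    rewrite Ev in hv1. rewrite Er in hr.
    subst u v s t r.
    assert (hqb : Cminus (RtoC q) b <> RtoC 0).
    { intro E. apply hr. replace b with (RtoC q) by (rewrite <- (Cplus_0_l b), <- E; ring). field; auto. }
    assert (hbq : Cminus b (RtoC q) <> RtoC 0).
    { intro E. apply hqb. replace (Cminus (RtoC q) b) with (Copp (Cminus b (RtoC q))) by ring. rewrite E. ring. }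
    field. repeat split; auto.
  - unfold F.
    assert (L := CL_plus _ _ _ _
      (CL_mult _ _ _ _ (phi_cont' q a b s z h0 h1 hb) (phi_cont' q u v t z h0 h1 hv))
      (CL_mult _ _ _ _ (CL_mult _ _ _ _ (CL_mult _ _ _ _ (CL_const (Cmult r (Cminus (RtoC 1) s))) (CL_qn q z h0 h1))
                                         (CL_const (Cinv Dn)))
         (CL_mult _ _ _ _ (phi_cont' q a (Cmult b (RtoC q)) (Cmult s (RtoC q)) z h0 h1 (good_shift q b hb))
                          (phi_cont' q (Cmult u (RtoC q)) (Cmult v (RtoC q)) t z h0 h1 (good_shift q v hv))))).
    replace (RtoC 1) with (Cplus (Cmult (RtoC 1) (RtoC 1))
       (Cmult (Cmult (Cmult (Cmult r (Cminus (RtoC 1) s)) (RtoC 0)) (Cinv Dn)) (Cmult (RtoC 1) (RtoC 1)))) by ring.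
    exact L.
Qed.

Lemma part1_core q a b u v z : 0 < q -> q < 1 -> good q b -> good q v ->
  a <> RtoC 0 -> b <> RtoC 0 -> Cminus b (RtoC q) <> RtoC 0 ->
  Cmult u b = a -> Cmult v b = RtoC q ->
  Cminus (Cmult (phi11 a b q (Cmult (Copp b) z)) (phi11 u v q (Cmult (Copp (RtoC q)) z)))
    (Cmult (Cmult (Cdiv (Cdiv (Cmult b (Cminus b a)) (Cminus b (RtoC q))) (Cminus (RtoC 1) b)) z)
       (Cmult (phi11 a (Cmult b (RtoC q)) q (Cmult (Copp (Cmult b (RtoC q))) z))
              (phi11 (Cmult u (RtoC q)) (Cmult v (RtoC q)) q (Cmult (Copp (RtoC q)) z))))
  = qpoch_inf (Cmult (Copp a) z) q.
Proof.
  intros h0 h1 hb hv ha hb0 hbq Hu Hv.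
  set (kk := Cdiv (Cdiv (Cmult b (Cminus b a)) (Cminus b (RtoC q))) (Cminus (RtoC 1) b)).
  set (F := fun w => Cminus (Cmult (phi11 a b q (Cmult (Copp b) w)) (phi11 u v q (Cmult (Copp (RtoC q)) w)))
    (Cmult (Cmult kk w)
       (Cmult (phi11 a (Cmult b (RtoC q)) q (Cmult (Copp (Cmult b (RtoC q))) w))
              (phi11 (Cmult u (RtoC q)) (Cmult v (RtoC q)) q (Cmult (Copp (RtoC q)) w))))).
  change (F z = qpoch_inf (Cmult (Copp a) z) q).
  assert (hv1 := good_1 q v hv). assert (hb1 := good_1 q b hb).
  assert (hq : RtoC q <> RtoC 0) by (intro E; injection E; lra).
  apply iter_prod; auto.
  - intro w. unfold F.
    assert (RA := G3 q a b (Cmult (Copp b) w) h0 h1 hb).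
    rewrite (phi_arg a b q (Cmult (RtoC q) (Cmult (Copp b) w)) (Cmult (Copp b) (Cmult (RtoC q) w))) in RA by ring.
    rewrite (phi_arg a (Cmult b (RtoC q)) q (Cmult (RtoC q) (Cmult (RtoC q) (Cmult (Copp b) w)))
       (Cmult (Copp (Cmult b (RtoC q))) (Cmult (RtoC q) w))) in RA by ring.
    assert (RC := G1 q a b (Cmult (Copp (Cmult b (RtoC q))) w) h0 h1 hb).
    rewrite (phi_arg a b q (Cmult (Copp (Cmult b (RtoC q))) w) (Cmult (Copp b) (Cmult (RtoC q) w))) in RC by ring.
    rewrite (phi_arg a (Cmult b (RtoC q)) q (Cmult (RtoC q) (Cmult (Copp (Cmult b (RtoC q))) w))
       (Cmult (Copp (Cmult b (RtoC q))) (Cmult (RtoC q) w))) in RC by ring.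
    assert (RB := G4 q u v (Cmult (Copp (RtoC q)) w) h0 h1 hv).
    rewrite (phi_arg u v q (Cmult (RtoC q) (Cmult (Copp (RtoC q)) w)) (Cmult (Copp (RtoC q)) (Cmult (RtoC q) w))) in RB by ring.
    rewrite (phi_arg (Cmult u (RtoC q)) (Cmult v (RtoC q)) q (Cmult (RtoC q) (Cmult (Copp (RtoC q)) w)) (Cmult (Copp (RtoC q)) (Cmult (RtoC q) w))) in RB by ring.
    assert (RD := G2 q u v (Cmult (Copp (RtoC q)) w) h0 h1 hv).
    rewrite (phi_arg u v q (Cmult (RtoC q) (Cmult (Copp (RtoC q)) w)) (Cmult (Copp (RtoC q)) (Cmult (RtoC q) w))) in RD by ring.
    rewrite (phi_arg (Cmult u (RtoC q)) (Cmult v (RtoC q)) q (Cmult (RtoC q) (Cmult (Copp (RtoC q)) w)) (Cmult (Copp (RtoC q)) (Cmult (RtoC q) w))) in RD by ring.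
    rewrite RA, RC, RB, RD. unfold kk.
    assert (Eu : u = Cdiv a b) by (rewrite <- Hu; field; auto).
    assert (Ev : v = Cdiv (RtoC q) b) by (rewrite <- Hv; field; auto).
    rewrite Ev in hv1. subst u v.
    assert (hqb : Cminus (RtoC q) b <> RtoC 0).
    { intro E. apply hbq. replace (Cminus b (RtoC q)) with (Copp (Cminus (RtoC q) b)) by ring. rewrite E. ring. }
    field. repeat split; auto.
  - unfold F.
    assert (L := CL_plus _ _ _ _
      (CL_mult _ _ _ _ (phi_cont' q a b (Copp b) z h0 h1 hb) (phi_cont' q u v (Copp (RtoC q)) z h0 h1 hv))
      (CL_mult _ _ _ _ (CL_const (RtoC (-1))) (CL_mult _ _ _ _ (CL_mult _ _ _ _ (CL_const kk) (CL_qn q z h0 h1))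
         (CL_mult _ _ _ _ (phi_cont' q a (Cmult b (RtoC q)) (Copp (Cmult b (RtoC q))) z h0 h1 (good_shift q b hb))
                          (phi_cont' q (Cmult u (RtoC q)) (Cmult v (RtoC q)) (Copp (RtoC q)) z h0 h1 (good_shift q v hv)))))).
    assert (E : RtoC (-1) = Copp (RtoC 1)) by (apply injective_projections; simpl; lra).
    rewrite E in L.
    replace (RtoC 1) with (Cplus (Cmult (RtoC 1) (RtoC 1)) (Cmult (Copp (RtoC 1))
       (Cmult (Cmult kk (RtoC 0)) (Cmult (RtoC 1) (RtoC 1))))) by ring.
    eapply CL_ext; [|exact L]. intro n. cbv beta. unfold Cminus. ring.
Qed.


Theorem mainTheorem12 (q : R) (al ga z L : C)
  (hq0 : 0 < q) (hq1 : q < 1)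
  (hga : forall m : Z, qpow q ga <> qpow q (RtoC (IZR m)))
  (hz : z <> RtoC 0) (hL : cexp L = z) :
  Cminus (Cmult (phi_n q al ga z 0) (psi_n q al ga z L 1))
         (Cmult (phi_n q al ga z 1) (psi_n q al ga z L 0))
  = Cmult (qpow q (Cminus (Copp (Cmult al (Cplus ga (RtoC 1))))
                          (Cdiv (Cmult ga (Cminus ga (RtoC 1))) (RtoC 2))))
    (Cmult (qpoch_inf (qpow q (Cplus (Cminus ga al) (RtoC 1))) q)
    (Cmult (qpoch_inf (Copp (Cmult (qpow q al) z)) q)
           (zpow L (Copp ga))))
  /\
  Cplus
    (Cmult (phi11 (qpow q al) (qpow q ga) q (Cmult (qpow q (Cminus ga al)) z))
           (phi11 (qpow q (Cminus al ga)) (qpow q (Cminus (RtoC 1) ga)) q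
                  (Cmult (qpow q (Cminus (RtoC 1) al)) z)))
    (Cmult
      (Cdiv (Cmult (Cmult (qpow q (Cminus ga (RtoC 1)))
                          (Cminus (RtoC 1) (qpow q (Cminus ga al)))) z)
            (Cmult (Cminus (RtoC 1) (qpow q (Cminus ga (RtoC 1))))
                   (Cminus (RtoC 1) (qpow q ga))))
      (Cmult (phi11 (qpow q al) (qpow q (Cplus ga (RtoC 1))) q
                    (Cmult (qpow q (Cplus (Cminus ga al) (RtoC 1))) z))
             (phi11 (qpow q (Cplus (Cminus al ga) (RtoC 1)))
                    (qpow q (Cminus (RtoC 2) ga)) q
                    (Cmult (qpow q (Cminus (RtoC 1) al)) z))))
  = qpoch_inf z q.
Proof.
  assert (Q1 := qpow_1 q hq0).
  assert (hb : good q (qpow q ga)) by (apply good_from; auto; apply hga_1; auto).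
  assert (hv : good q (qpow q (Cminus (RtoC 1) ga))) by (apply good_from; auto; apply hga_2; auto).
  assert (hq : RtoC q <> RtoC 0) by (intro E; injection E; lra).
  assert (hbq : Cminus (qpow q ga) (RtoC q) <> RtoC 0).
  { intro E. apply (hga 1%Z). rewrite Q1. replace (qpow q ga) with (Cplus (Cminus (qpow q ga) (RtoC q)) (RtoC q)) by ring.
    rewrite E. ring. }
  set (a := qpow q al) in *. set (b := qpow q ga) in *.
  set (u := qpow q (Cminus al ga)) in *. set (v := qpow q (Cminus (RtoC 1) ga)) in *.
  assert (ha : a <> RtoC 0) by apply qpow_neq0.
  assert (hb0 : b <> RtoC 0) by apply qpow_neq0.
  assert (Hu : Cmult u b = a) by (unfold u, b, a; rewrite <- qpow_add; apply qpow_ext; ring).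
  assert (Hv : Cmult v b = RtoC q) by (unfold v, b; rewrite <- qpow_add, <- Q1; apply qpow_ext; ring).
  assert (Ebq : qpow q (Cplus ga (RtoC 1)) = Cmult b (RtoC q)) by (unfold b; rewrite <- Q1, <- qpow_add; reflexivity).
  assert (Euq : qpow q (Cplus (Cminus al ga) (RtoC 1)) = Cmult u (RtoC q)) by (unfold u; rewrite <- Q1, <- qpow_add; reflexivity).
  assert (Evq : qpow q (Cminus (RtoC 2) ga) = Cmult v (RtoC q)).
  { unfold v; rewrite <- Q1, <- qpow_add; apply qpow_ext. unfold RtoC, Cplus, Cminus, Copp; apply injective_projections; simpl; ring. }
  split.
  - unfold phi_n, psi_n. cbv zeta. fold a b.
    set (EE := qpow q (Cminus (Copp (Cmult al (Cplus ga (RtoC 1)))) (Cdiv (Cmult ga (Cminus ga (RtoC 1))) (RtoC 2)))).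
    set (s := qpow q (Cminus ga al)). set (r := qpow q (Cminus ga (RtoC 1))).
    assert (h2 : RtoC 2 <> RtoC 0) by (intro E; injection E; lra).
    assert (Qm1 : qpow q (Copp (RtoC 1)) = Cdiv (RtoC 1) (RtoC q)).
    { assert (X := qpow_add q (Copp (RtoC 1)) (RtoC 1)).
      rewrite (qpow_ext q (Cplus (Copp (RtoC 1)) (RtoC 1)) (RtoC 0)), qpow_0, Q1 in X by ring.
      replace (Cdiv (RtoC 1) (RtoC q)) with (Cdiv (Cmult (qpow q (Copp (RtoC 1))) (RtoC q)) (RtoC q)) by (f_equal; exact (eq_sym X)).
      field; auto. }
    assert (e0 : qpow q (Cplus (RtoC 0) ga) = b) by (apply qpow_ext; ring).
    assert (e1 : qpow q (Cplus (RtoC 1) ga) = Cmult b (RtoC q)) by (rewrite <- Ebq; apply qpow_ext; ring).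
    assert (eE1 : qpow q (Cminus (Copp (Cmult al (Cplus (RtoC 1) ga)))
       (Cdiv (Cmult (Cminus (Cplus (RtoC 1) ga) (RtoC 1)) (Cminus (Cplus (RtoC 1) ga) (RtoC 2))) (RtoC 2))) = EE)
      by (apply qpow_ext; field; auto).
    assert (eE0 : qpow q (Cminus (Copp (Cmult al (Cplus (RtoC 0) ga)))
       (Cdiv (Cmult (Cminus (Cplus (RtoC 0) ga) (RtoC 1)) (Cminus (Cplus (RtoC 0) ga) (RtoC 2))) (RtoC 2)))
       = Cmult EE (Cmult (Cmult a b) (Cdiv (RtoC 1) (RtoC q)))).
    { unfold EE, a, b. rewrite <- Qm1, <- !qpow_add. apply qpow_ext. field; auto. }
    assert (eY : qpow q (Cminus (Cplus (RtoC 1) ga) al) = qpow q (Cplus (Cminus ga al) (RtoC 1))) by (apply qpow_ext; ring).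
    assert (eb1 : qpow q (Cminus (Cplus (RtoC 1) ga) (RtoC 1)) = b) by (apply qpow_ext; ring).
    assert (es : qpow q (Cminus (Cplus (RtoC 0) ga) al) = s) by (apply qpow_ext; ring).
    assert (er : qpow q (Cminus (Cplus (RtoC 0) ga) (RtoC 1)) = r) by (apply qpow_ext; ring).
    assert (eu : qpow q (Cplus (Cminus al (Cplus (RtoC 1) ga)) (RtoC 1)) = u) by (apply qpow_ext; ring).
    assert (ev : qpow q (Cminus (RtoC 2) (Cplus (RtoC 1) ga)) = v).
    { apply qpow_ext. unfold RtoC, Cplus, Cminus, Copp; apply injective_projections; simpl; ring. }
    assert (euq : qpow q (Cplus (Cminus al (Cplus (RtoC 0) ga)) (RtoC 1)) = Cmult u (RtoC q)) by (rewrite <- Euq; apply qpow_ext; ring).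
    assert (evq : qpow q (Cminus (RtoC 2) (Cplus (RtoC 0) ga)) = Cmult v (RtoC q)) by (rewrite <- Evq; apply qpow_ext; ring).
    assert (ez1 : zpow L (Cminus (RtoC 1) (Cplus (RtoC 1) ga)) = zpow L (Copp ga)) by (unfold zpow; f_equal; ring).
    assert (ez0 : zpow L (Cminus (RtoC 1) (Cplus (RtoC 0) ga)) = Cmult z (zpow L (Copp ga))).
    { rewrite <- hL, <- zpow_1, <- zpow_add. unfold zpow; f_equal; ring. }
    rewrite eE1, eE0, eY, eb1, es, er, eu, ev, euq, evq, ez1, ez0, e0, e1.
    assert (Hs : Cmult s a = b) by (unfold s, a, b; rewrite <- qpow_add; apply qpow_ext; ring).
    assert (Hr : Cmult r (RtoC q) = b) by (unfold r, b; rewrite <- Q1, <- qpow_add; apply qpow_ext; ring).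
    assert (Esq : Cmult s (RtoC q) = qpow q (Cplus (Cminus ga al) (RtoC 1))) by (unfold s; rewrite <- Q1, <- qpow_add; reflexivity).
    rewrite (qpoch_inf_rec q s hq0 hq1), Esq, (qpoch_inf_rec q r hq0 hq1), Hr, (qpoch_inf_rec q b hq0 hq1).
    rewrite (phi_arg a b q (Copp (Cmult b z)) (Cmult (Copp b) z)) by ring.
    rewrite (phi_arg a (Cmult b (RtoC q)) q (Copp (Cmult (Cmult b (RtoC q)) z)) (Cmult (Copp (Cmult b (RtoC q))) z)) by ring.
    rewrite (phi_arg u v q (Copp (Cmult (RtoC q) z)) (Cmult (Copp (RtoC q)) z)) by ring.
    rewrite (phi_arg (Cmult u (RtoC q)) (Cmult v (RtoC q)) q (Copp (Cmult (RtoC q) z)) (Cmult (Copp (RtoC q)) z)) by ring.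
    replace (qpoch_inf (Copp (Cmult a z)) q) with (qpoch_inf (Cmult (Copp a) z) q) by (f_equal; ring).
    rewrite <- (part1_core q a b u v z hq0 hq1 hb hv ha hb0 hbq Hu Hv).
    assert (hX := qpoch_inf_neq0 q (Cmult b (RtoC q)) hq0 hq1 (good_shift q b hb)).
    assert (hb1 := good_1 q b hb).
    assert (hr : Cminus (RtoC 1) r <> RtoC 0).
    { intro E. apply hbq. rewrite <- Hr. replace r with (RtoC 1) by (rewrite <- (Cplus_0_l r), <- E; ring). ring. }
    assert (Es : s = Cdiv b a) by (rewrite <- Hs; field; auto).
    assert (Er : r = Cdiv b (RtoC q)) by (rewrite <- Hr; field; auto).
    rewrite Er in hr |- *. rewrite Es.
    assert (hqb : Cminus (RtoC q) b <> RtoC 0).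
    { intro E. apply hbq. replace (Cminus b (RtoC q)) with (Copp (Cminus (RtoC q) b)) by ring. rewrite E. ring. }
    field. repeat split; auto.
  - set (s := qpow q (Cminus ga al)). set (t := qpow q (Cminus (RtoC 1) al)). set (r := qpow q (Cminus ga (RtoC 1))).
    assert (Hs : Cmult s a = b) by (unfold s, a, b; rewrite <- qpow_add; apply qpow_ext; ring).
    assert (Ht : Cmult t a = RtoC q) by (unfold t, a; rewrite <- qpow_add, <- Q1; apply qpow_ext; ring).
    assert (Hr : Cmult r (RtoC q) = b) by (unfold r, b; rewrite <- Q1, <- qpow_add; apply qpow_ext; ring).
    assert (Esq : qpow q (Cplus (Cminus ga al) (RtoC 1)) = Cmult s (RtoC q)) by (unfold s; rewrite <- Q1, <- qpow_add; reflexivity).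
    assert (hr : Cminus (RtoC 1) r <> RtoC 0).
    { intro E. apply hbq. rewrite <- Hr. replace r with (RtoC 1) by (rewrite <- (Cplus_0_l r), <- E; ring). ring. }
    rewrite Ebq, Euq, Evq, Esq.
    apply part2_core; auto.
Qed.
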